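(* There exist absolute constants $C_1,C_2>0$ such that the following holds. Let $P_*\in\mathcal N(n,K_*,L_* )$ be the true probability matrix, with parameters satisfying Assumptions A1 and A2, and let $A$ be generated from $P_*$ as in the network model. For $1\le L\le K\le n$ set $$\mathrm{Pen}(K,L)=C_1(nL+K^2)\ln n+C_2\, n\ln K .$$ Let $(\hat K,\hat L,\hat P)$ be a solution of $$(\hat K,\hat L,\hat P)\in\operatorname*{argmin}_{1\le L\le K\le n,\ P\in\mathcal N(n,K,L)}\Big\{\|A-P\|_F^2+\mathrm{Pen}(K,L)\Big\}.$$ Then for any $K,L$ with $1\le L\le K\le n$ and any $P\in\mathcal N(n,K,L)$, $$\mathbb P\Big\{\|\hat P-P_*\|_F^2\le 3\big[\|P-P_*\|_F^2+\mathrm{Pen}(K,L)\big]\Big\}\ge 1-(n^2\log_2 n+1)e^{-n/32},$$ and $$\mathbb E\|\hat P-P_*\|_F^2\le 3\big[\|P-P_*\|_F^2+\mathrm{Pen}(K,L)\big]+n^5e^{-n/32}.$$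
   Context: Network model: $n\ge 2$ nodes; $P_*\in[0,1]^{n\times n}$ is symmetric; $A\in\{0,1\}^{n\times n}$ is symmetric with entries $A_{ij}$, $1\le i\le j\le n$, independent, $A_{ij}\sim\mathrm{Bernoulli}((P_* )_{ij})$, and $A_{ji}=A_{ij}$. Nested Block Model class: for integers $1\le L\le K\le n$, $\mathcal N(n,K,L)$ is the set of matrices $P\in[0,1]^{n\times n}$ for which there exist a clustering function $z:\{1,\dots,n\}\to\{1,\dots,K\}$ (communities), a clustering function $c:\{1,\dots,K\}\to\{1,\dots,L\}$ (meta-communities), a matrix $B\in[0,1]^{K\times K}$ and a matrix $H\in\mathbb R_+^{n\times L}$ such that, with $n_k=\#\{i:z(i)=k\}$, $$\sum_{i:\,z(i)=k}H_{i,l}=n_k\quad\text{for all }k\le K,\ l\le L,$$ and $$P_{ij}=B_{z(i),z(j)}\,H_{i,c(z(j))}\,H_{j,c(z(i))}\quad\text{for all }i,j.$$ For such a representation, $h^{(k,l)}\in\mathbb R_+^{n_k}$ denotes the subvector $(H_{i,l})_{i:\,z(i)=k}$. Assumptions on the true matrix $P_*\in\mathcal N(n,K_*,L_* )$ with representation $(z_*,c_*,B,H)$: - A1: $B$ is nonsingular with smallest singular value at least $\lambda_0>0$. - A2: for each $k=1,\dots,K_*$, the vectors $h^{(k,l)}$, $l=1,\dots,L_*$, are linearly independent. *)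

(* Defs.v *)
From Stdlib Require Import Reals List Arith.
Import ListNotations.
Open Scope R_scope.

(* Matrices / vectors are functions on nat; only indices < dimension matter.
   Indices are 0-based: nodes 0..n-1, communities 0..K-1, meta-communities 0..L-1. *)

Fixpoint rsum (m : nat) (f : nat -> R) : R :=
  match m with
  | O => 0
  | S k => rsum k f + f k
  end.

Definition rprod (l : list (nat * nat)) (f : nat -> nat -> R) : R :=
  fold_right (fun p acc => f (fst p) (snd p) * acc) 1 l.

Definition NBM_rep (n K L : nat) (P : nat -> nat -> R)
  (z : nat -> nat) (c : nat -> nat) (B : nat -> nat -> R) (H : nat -> nat -> R) : Prop :=
  (forall i, (i < n)%nat -> (z i < K)%nat) /\
  (forall k, (k < K)%nat -> (c k < L)%nat) /\
  (forall k k', (k < K)%nat -> (k' < K)%nat -> 0 <= B k k' <= 1) /\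
  (forall i l, (i < n)%nat -> (l < L)%nat -> 0 <= H i l) /\
  (forall k l, (k < K)%nat -> (l < L)%nat ->
     rsum n (fun i => if Nat.eqb (z i) k then H i l else 0)
     = rsum n (fun i => if Nat.eqb (z i) k then 1 else 0)) /\
  (forall i j, (i < n)%nat -> (j < n)%nat -> 0 <= P i j <= 1) /\
  (forall i j, (i < n)%nat -> (j < n)%nat ->
     P i j = B (z i) (z j) * H i (c (z j)) * H j (c (z i))).

Definition in_NBM (n K L : nat) (P : nat -> nat -> R) : Prop :=
  exists z c B H, NBM_rep n K L P z c B H.

(* A1: the smallest singular value of the K x K matrix B is at least lam0,
   i.e. min_{|x|_2 = 1} |B x|_2 >= lam0, written homogeneously. *)
Definition min_sing_value_ge (K : nat) (B : nat -> nat -> R) (lam0 : R) : Prop :=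
  forall x : nat -> R,
    rsum K (fun k => (rsum K (fun k' => B k k' * x k'))^2)
    >= lam0^2 * rsum K (fun k => (x k)^2).

Definition A2_lin_indep (n K L : nat) (z : nat -> nat) (H : nat -> nat -> R) : Prop :=
  forall k, (k < K)%nat ->
    forall a : nat -> R,
      (forall i, (i < n)%nat -> z i = k -> rsum L (fun l => a l * H i l) = 0) ->
      forall l, (l < L)%nat -> a l = 0.

Definition frob2 (n : nat) (P Q : nat -> nat -> R) : R :=
  rsum n (fun i => rsum n (fun j => (P i j - Q i j)^2)).

Definition b2R (b : bool) : R := if b then 1 else 0.

Definition adjR (A : nat -> nat -> bool) : nat -> nat -> R := fun i j => b2R (A i j).

Definition upper_pairs (n : nat) : list (nat * nat) :=
  flat_map (fun j => map (fun i => (i, j)) (seq 0 (S j))) (seq 0 n).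

Definition setsym (A : nat -> nat -> bool) (i j : nat) (b : bool) : nat -> nat -> bool :=
  fun a b' => if ((Nat.eqb a i && Nat.eqb b' j) || (Nat.eqb a j && Nat.eqb b' i))%bool
              then b else A a b'.

(* Sum of F over all symmetric 0/1 adjacency matrices whose free entries are
   the pairs in l (all other entries 0). *)
Fixpoint sum_adj (l : list (nat * nat)) (F : (nat -> nat -> bool) -> R) : R :=
  match l with
  | [] => F (fun _ _ => false)
  | (i, j) :: t => sum_adj t (fun A => F (setsym A i j true) + F (setsym A i j false))
  end.

Definition adj_weight (n : nat) (P : nat -> nat -> R) (A : nat -> nat -> bool) : R :=
  rprod (upper_pairs n) (fun i j => if A i j then P i j else 1 - P i j).

Definition Expect (n : nat) (P : nat -> nat -> R) (X : (nat -> nat -> bool) -> R) : R :=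
  sum_adj (upper_pairs n) (fun A => adj_weight n P A * X A).

Definition Prob_le (n : nat) (P : nat -> nat -> R) (X Y : (nat -> nat -> bool) -> R) : R :=
  Expect n P (fun A => if Rle_dec (X A) (Y A) then 1 else 0).

Definition Pen (C1 C2 : R) (n K L : nat) : R :=
  C1 * (INR n * INR L + INR K ^ 2) * ln (INR n) + C2 * INR n * ln (INR K).

Definition objective (C1 C2 : R) (n K L : nat) (A : nat -> nat -> bool)
  (P : nat -> nat -> R) : R :=
  frob2 n (adjR A) P + Pen C1 C2 n K L.

Definition is_argmin (C1 C2 : R) (n : nat) (A : nat -> nat -> bool)
  (Kh Lh : nat) (Ph : nat -> nat -> R) : Prop :=
  (1 <= Lh)%nat /\ (Lh <= Kh)%nat /\ (Kh <= n)%nat /\ in_NBM n Kh Lh Ph /\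
  forall K L P, (1 <= L)%nat -> (L <= K)%nat -> (K <= n)%nat -> in_NBM n K L P ->
    objective C1 C2 n Kh Lh A Ph <= objective C1 C2 n K L A P.

(* Main.v *)
Require Import Defs.
From Stdlib Require Import Reals List Lra Lia IndefiniteDescription.
Import ListNotations.
Open Scope R_scope.


Lemma exp_le : forall x y, x <= y -> exp x <= exp y.
Proof. intros x y H; destruct (Rle_lt_or_eq_dec _ _ H) as [h|h];
  [left; apply exp_increasing; auto | subst; lra]. Qed.

Lemma ln_le : forall x y, 0 < x -> x <= y -> ln x <= ln y.
Proof. intros x y Hx H; destruct (Rle_lt_or_eq_dec _ _ H) as [h|h];
  [left; apply ln_increasing; auto | subst; lra]. Qed.

Lemma rsum_ext : forall m f g, (forall i, (i < m)%nat -> f i = g i) -> rsum m f = rsum m g.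
Proof. induction m; intros f g H; simpl; auto. rewrite (IHm f g) by (intros; apply H; lia).
  rewrite H by lia; auto. Qed.

Lemma rsum_le : forall m f g, (forall i, (i < m)%nat -> f i <= g i) -> rsum m f <= rsum m g.
Proof. induction m; intros f g H; simpl; [lra|].
  pose proof (IHm f g (fun i Hi => H i ltac:(lia))). pose proof (H m ltac:(lia)). lra. Qed.

Lemma rsum_plus : forall m f g, rsum m (fun i => f i + g i) = rsum m f + rsum m g.
Proof. induction m; intros; simpl; [lra|]. rewrite IHm; lra. Qed.

Lemma rsum_scal : forall m c f, rsum m (fun i => c * f i) = c * rsum m f.
Proof. induction m; intros; simpl; [lra|]. rewrite IHm; lra. Qed.

Lemma rsum_const : forall m c, rsum m (fun _ => c) = INR m * c.
Proof. induction m; intros; simpl rsum; [simpl; lra|]. rewrite IHm, S_INR; lra. Qed.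

Lemma rsum_nonneg : forall m f, (forall i, (i < m)%nat -> 0 <= f i) -> 0 <= rsum m f.
Proof. intros. replace 0 with (rsum m (fun _ => 0)). apply rsum_le; auto.
  rewrite rsum_const; lra. Qed.

Definition lsum {X : Type} (l : list X) (f : X -> R) : R :=
  fold_right (fun x acc => f x + acc) 0 l.

Lemma lsum_app : forall X (l1 l2 : list X) f, lsum (l1 ++ l2) f = lsum l1 f + lsum l2 f.
Proof. induction l1; intros; simpl; [lra|]. unfold lsum in *; simpl. rewrite IHl1; lra. Qed.

Lemma lsum_seq_pair : forall (n m : nat) (h : nat * nat -> R),
  lsum (map (fun i => (i, n)) (seq 0 m)) h = rsum m (fun i => h (i, n)).
Proof. intros n m h; induction m; [reflexivity|].
  rewrite seq_S, map_app, lsum_app, IHm. simpl. unfold lsum; simpl; lra. Qed.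

Lemma upper_pairs_S : forall n, upper_pairs (S n) = upper_pairs n ++ map (fun i => (i, n)) (seq 0 (S n)).
Proof. intros. unfold upper_pairs. rewrite (seq_S n 0) at 1. rewrite flat_map_app. cbn [flat_map]. rewrite app_nil_r. reflexivity. Qed.

Definition pairval (M : nat -> nat -> R) (p : nat * nat) : R :=
  if Nat.eqb (fst p) (snd p) then M (fst p) (fst p) else M (fst p) (snd p) + M (snd p) (fst p).

Lemma pair_identity : forall n M,
  rsum n (fun i => rsum n (fun j => M i j)) = lsum (upper_pairs n) (pairval M).
Proof.
  induction n; intros M; [reflexivity|].
  rewrite upper_pairs_S, lsum_app, lsum_seq_pair, <- IHn.
  simpl rsum. rewrite rsum_plus.
  unfold pairval at 2; simpl. rewrite Nat.eqb_refl.
  rewrite (rsum_ext n (fun i => pairval M (i, n)) (fun i => M i n + M n i)).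
  2:{ intros i Hi. unfold pairval; simpl. destruct (Nat.eqb_spec i n); [lia|auto]. }
  rewrite rsum_plus. change (rsum n (M n)) with (rsum n (fun j => M n j)). lra.
Qed.

Definition sym (A : nat -> nat -> bool) := forall i j, A i j = A j i.

Lemma setsym_sym : forall A i j b, sym A -> sym (setsym A i j b).
Proof. unfold sym, setsym; intros A i j b H x y.
  destruct (Nat.eqb_spec x i), (Nat.eqb_spec y j), (Nat.eqb_spec x j), (Nat.eqb_spec y i);
  simpl; auto. Qed.

Lemma sum_adj_ext : forall l F G, (forall A, F A = G A) -> sum_adj l F = sum_adj l G.
Proof. induction l as [|[i j] t IH]; intros F G H; simpl; auto.
  apply IH; intros; rewrite !H; auto. Qed.

Lemma sum_adj_le_gen : forall l F G, (forall A, sym A -> F A <= G A) ->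
  sum_adj l F <= sum_adj l G.
Proof. induction l as [|[i j] t IH]; intros F G H; simpl.
  - apply H. intros x y; auto.
  - apply IH. intros A HA. pose proof (H _ (setsym_sym A i j true HA)).
    pose proof (H _ (setsym_sym A i j false HA)). lra. Qed.

Lemma sum_adj_plus : forall l F G, sum_adj l (fun A => F A + G A) = sum_adj l F + sum_adj l G.
Proof. induction l as [|[i j] t IH]; intros F G; simpl; auto.
  rewrite <- IH. apply sum_adj_ext; intros; lra. Qed.

Lemma sum_adj_scal : forall l c F, sum_adj l (fun A => c * F A) = c * sum_adj l F.
Proof. induction l as [|[i j] t IH]; intros c F; simpl; auto.
  rewrite <- IH. apply sum_adj_ext; intros; lra. Qed.

Lemma sum_adj_zero : forall l, sum_adj l (fun _ => 0) = 0.
Proof. intros. rewrite (sum_adj_ext l (fun _ => 0) (fun A => 0 * 0)) by (intros; lra).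
  rewrite sum_adj_scal; lra. Qed.

Lemma sum_adj_lsum : forall X (L : list X) l (F : X -> (nat -> nat -> bool) -> R),
  sum_adj l (fun A => lsum L (fun x => F x A)) = lsum L (fun x => sum_adj l (F x)).
Proof. induction L; intros; simpl.
  - unfold lsum; simpl. apply sum_adj_zero.
  - unfold lsum in *; simpl. rewrite sum_adj_plus, IHL; auto. Qed.

Lemma sum_adj_rsum : forall m l (F : nat -> (nat -> nat -> bool) -> R),
  sum_adj l (fun A => rsum m (fun x => F x A)) = rsum m (fun x => sum_adj l (F x)).
Proof. induction m; intros; simpl.
  - apply sum_adj_zero.
  - rewrite sum_adj_plus, IHm; auto. Qed.

Definition lprod {X : Type} (l : list X) (g : X -> R) : R :=
  fold_right (fun p acc => g p * acc) 1 l.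

Lemma lprod_ext : forall X (l : list X) f g, (forall p, In p l -> f p = g p) -> lprod l f = lprod l g.
Proof. induction l; intros; unfold lprod; simpl; auto. rewrite H by (left; auto).
  fold (lprod l f). fold (lprod l g). rewrite (IHl f g); auto. intros; apply H; right; auto. Qed.

Fixpoint good (l : list (nat * nat)) : Prop :=
  match l with
  | [] => True
  | (i, j) :: t => (forall p, In p t -> p <> (i, j) /\ p <> (j, i)) /\ good t
  end.

Lemma sum_adj_prod : forall l (phi : nat * nat -> bool -> R), good l ->
  sum_adj l (fun A => lprod l (fun p => phi p (A (fst p) (snd p)))) =
  lprod l (fun p => phi p true + phi p false).
Proof.
  induction l as [|[i j] t IH]; intros phi Hg; simpl.
  - unfold lprod; simpl; lra.
  - destruct Hg as [Hd Hg]. unfold lprod; simpl. fold (lprod t (fun p => phi p true + phi p false)).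
    rewrite <- IH by auto. rewrite <- sum_adj_scal. apply sum_adj_ext. intros A.
    cbn [fst snd].
    fold (lprod t (fun p => phi p (setsym A i j true (fst p) (snd p)))).
    fold (lprod t (fun p => phi p (setsym A i j false (fst p) (snd p)))).
    rewrite (lprod_ext _ t (fun p => phi p (setsym A i j true (fst p) (snd p))) (fun p => phi p (A (fst p) (snd p)))).
    rewrite (lprod_ext _ t (fun p => phi p (setsym A i j false (fst p) (snd p))) (fun p => phi p (A (fst p) (snd p)))).
    unfold setsym at 1 2. rewrite !Nat.eqb_refl; simpl. lra.
    all: intros [a b] Hin; destruct (Hd _ Hin) as [h1 h2]; unfold setsym; simpl;
      destruct (Nat.eqb_spec a i), (Nat.eqb_spec b j), (Nat.eqb_spec a j), (Nat.eqb_spec b i);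
      subst; simpl; auto; congruence.
Qed.

Lemma good_of_nodup : forall l, NoDup l -> (forall p, In p l -> (fst p <= snd p)%nat) -> good l.
Proof. induction l as [|[i j] t IH]; intros Hn Hle; simpl; auto.
  inversion Hn; subst. split.
  - intros [a b] Hin. split; intro E.
    + injection E; intros; subst; auto.
    + injection E; intros; subst. pose proof (Hle (j,i) (or_intror Hin)).
      pose proof (Hle (i,j) (or_introl eq_refl)). simpl in *. assert (i = j) by lia. subst; auto.
  - apply IH; auto. intros; apply Hle; right; auto.
Qed.

Lemma in_upper : forall n p, In p (upper_pairs n) -> (fst p <= snd p /\ snd p < n)%nat.
Proof. induction n; intros p H; [simpl in H; contradiction|].
  rewrite upper_pairs_S in H. apply in_app_or in H. destruct H as [H|H].
  - apply IHn in H; lia.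
  - apply in_map_iff in H. destruct H as [x [<- Hx]]. apply in_seq in Hx. simpl; lia. Qed.

Lemma nodup_upper : forall n, NoDup (upper_pairs n).
Proof. induction n; [constructor|]. rewrite upper_pairs_S. apply NoDup_app; auto.
  - apply NoDup_map_NoDup_ForallPairs; [|apply seq_NoDup]. intros x y _ _ E; injection E; auto.
  - intros p H1 H2. apply in_upper in H1. apply in_map_iff in H2. destruct H2 as [x [<- _]].
    simpl in H1; lia. Qed.

Lemma good_upper : forall n, good (upper_pairs n).
Proof. intros; apply good_of_nodup; [apply nodup_upper|]. intros; apply (in_upper n); auto. Qed.

Lemma lprod_mult : forall X (l : list X) f g, lprod l (fun p => f p * g p) = lprod l f * lprod l g.
Proof. induction l; intros; unfold lprod in *; simpl; [lra|]. rewrite IHl; lra. Qed.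

Lemma lprod_nonneg : forall X (l : list X) f, (forall p, In p l -> 0 <= f p) -> 0 <= lprod l f.
Proof. induction l; intros f H; unfold lprod in *; simpl; [lra|].
  apply Rmult_le_pos; [apply H; left; auto|]. apply IHl; intros; apply H; right; auto. Qed.

Lemma lprod_le : forall X (l : list X) f g, (forall p, In p l -> 0 <= f p <= g p) -> lprod l f <= lprod l g.
Proof. induction l; intros f g H; unfold lprod in *; simpl; [lra|].
  assert (H1 := H a (or_introl eq_refl)).
  assert (H2 : forall p, In p l -> 0 <= f p <= g p) by (intros; apply H; right; auto).
  pose proof (IHl f g H2). pose proof (lprod_nonneg _ l f (fun p Hp => proj1 (H2 p Hp))).
  unfold lprod in *. apply Rmult_le_compat; lra. Qed.

Lemma exp_lsum : forall X (l : list X) g, exp (lsum l g) = lprod l (fun p => exp (g p)).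
Proof. induction l; intros; unfold lprod, lsum in *; simpl. apply exp_0.
  rewrite exp_plus, IHl; auto. Qed.

Lemma lsum_le : forall X (l : list X) f g, (forall p, In p l -> f p <= g p) -> lsum l f <= lsum l g.
Proof. induction l; intros f g H; unfold lsum in *; simpl; [lra|].
  pose proof (H a (or_introl eq_refl)). pose proof (IHl f g (fun p Hp => H p (or_intror Hp))). lra. Qed.

Lemma lsum_scal : forall X (l : list X) c f, lsum l (fun p => c * f p) = c * lsum l f.
Proof. induction l; intros; unfold lsum in *; simpl; [lra|]. rewrite IHl; lra. Qed.

Lemma exp_bound : forall x, x <= 1/2 -> exp x <= 1 + x + 2 * x ^ 2.
Proof. intros x Hx. pose proof (exp_ineq1_le (- x)). rewrite exp_Ropp in H.
  pose proof (exp_pos x).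
  assert (H1 : 1 - x <= / exp x) by lra.
  assert (H2 : 0 < 1 - x) by lra.
  assert (exp x * (1 - x) <= 1).
  { apply Rmult_le_reg_r with (/ exp x). apply Rinv_0_lt_compat; auto.
    rewrite Rmult_1_l. replace (exp x * (1 - x) * / exp x) with (1 - x) by (field; lra). auto. }
  assert (0 <= x ^ 2 * (1 - 2 * x)) by (apply Rmult_le_pos; nra).
  nra. Qed.

Lemma bern_mgf : forall p y, 0 <= p <= 1 -> -(1/2) <= y <= 1/2 ->
  p * exp (y * (1 - p)) + (1 - p) * exp (y * (0 - p)) <= exp (2 * y ^ 2).
Proof. intros p y Hp Hy.
  assert (y * (1 - p) <= 1/2) by nra. assert (y * (0 - p) <= 1/2) by nra.
  pose proof (exp_bound _ H). pose proof (exp_bound _ H0).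
  pose proof (exp_ineq1_le (2 * y ^ 2)).
  assert (p * exp (y * (1 - p)) <= p * (1 + y * (1 - p) + 2 * (y * (1 - p)) ^ 2)) by (apply Rmult_le_compat_l; lra).
  assert ((1 - p) * exp (y * (0 - p)) <= (1 - p) * (1 + y * (0 - p) + 2 * (y * (0 - p)) ^ 2)) by (apply Rmult_le_compat_l; lra).
  assert (0 <= y^2 * (p * (1 - p))) by (apply Rmult_le_pos; nra).
  nra. Qed.

Lemma lsum_ext : forall X (l : list X) f g, (forall p, In p l -> f p = g p) -> lsum l f = lsum l g.
Proof. intros. apply Rle_antisym; apply lsum_le; intros; rewrite H; auto; lra. Qed.

Lemma sum_adj_ext_sym : forall l F G, (forall A, sym A -> F A = G A) -> sum_adj l F = sum_adj l G.
Proof. intros. apply Rle_antisym; apply sum_adj_le_gen; intros; rewrite H; auto; lra. Qed.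

Definition Sform (n : nat) (Pst : nat -> nat -> R) (A : nat -> nat -> bool) (D : nat -> nat -> R) : R :=
  rsum n (fun i => rsum n (fun j => (adjR A i j - Pst i j) * D i j)).

Definition Pbounded (n : nat) (Pst : nat -> nat -> R) :=
  forall i j, (i < n)%nat -> (j < n)%nat -> 0 <= Pst i j <= 1.
Definition Psym (n : nat) (Pst : nat -> nat -> R) :=
  forall i j, (i < n)%nat -> (j < n)%nat -> Pst i j = Pst j i.

Lemma Sform_pairs : forall n Pst A D, sym A -> Psym n Pst ->
  Sform n Pst A D = lsum (upper_pairs n) (fun p => (adjR A (fst p) (snd p) - Pst (fst p) (snd p)) * pairval D p).
Proof. intros n Pst A D HA HP. unfold Sform. rewrite pair_identity. apply lsum_ext.
  intros [i j] Hin. apply in_upper in Hin. simpl in Hin. unfold pairval; simpl.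
  destruct (Nat.eqb_spec i j); [subst; auto|].
  unfold adjR. rewrite (HA j i), (HP j i) by lia. ring. Qed.

Definition wt (Pst : nat -> nat -> R) (p : nat * nat) (b : bool) : R :=
  if b then Pst (fst p) (snd p) else 1 - Pst (fst p) (snd p).

Lemma adj_weight_lprod : forall n Pst A, adj_weight n Pst A = lprod (upper_pairs n) (fun p => wt Pst p (A (fst p) (snd p))).
Proof. reflexivity. Qed.

Lemma weight_nonneg : forall n Pst A, Pbounded n Pst -> 0 <= adj_weight n Pst A.
Proof. intros. rewrite adj_weight_lprod. apply lprod_nonneg. intros [i j] Hin.
  apply in_upper in Hin; simpl in Hin. unfold wt; simpl. destruct (H i j) as [h1 h2]; try lia.
  destruct (A i j); lra. Qed.

Lemma Expect_le : forall n Pst X Y, Pbounded n Pst -> (forall A, sym A -> X A <= Y A) ->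
  Expect n Pst X <= Expect n Pst Y.
Proof. intros. unfold Expect. apply sum_adj_le_gen. intros. apply Rmult_le_compat_l; auto.
  apply weight_nonneg; auto. Qed.

Lemma Expect_plus : forall n Pst X Y, Expect n Pst (fun A => X A + Y A) = Expect n Pst X + Expect n Pst Y.
Proof. intros. unfold Expect. rewrite <- sum_adj_plus. apply sum_adj_ext; intros; ring. Qed.

Lemma Expect_scal : forall n Pst c X, Expect n Pst (fun A => c * X A) = c * Expect n Pst X.
Proof. intros. unfold Expect. rewrite <- sum_adj_scal. apply sum_adj_ext; intros; ring. Qed.

Lemma Expect_const : forall n Pst c, Expect n Pst (fun _ => c) = c.
Proof. intros. unfold Expect.
  rewrite (sum_adj_ext _ _ (fun A => c * lprod (upper_pairs n) (fun p => wt Pst p (A (fst p) (snd p)))))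
    by (intros; rewrite adj_weight_lprod; ring).
  rewrite sum_adj_scal.
  rewrite (sum_adj_prod _ (wt Pst) (good_upper n)).
  rewrite (lprod_ext _ _ _ (fun _ => 1)).
  - assert (forall X (l : list X), lprod l (fun _ => 1) = 1) as E.
    { induction l; unfold lprod in *; simpl; auto. rewrite IHl; ring. }
    rewrite E; ring.
  - intros; unfold wt; simpl; ring. Qed.

Lemma Expect_lsum : forall X (L : list X) n Pst (F : X -> (nat -> nat -> bool) -> R),
  Expect n Pst (fun A => lsum L (fun x => F x A)) = lsum L (fun x => Expect n Pst (F x)).
Proof. intros. unfold Expect. rewrite <- sum_adj_lsum. apply sum_adj_ext. intros.
  rewrite <- lsum_scal. auto. Qed.

Lemma Expect_rsum : forall m n Pst (F : nat -> (nat -> nat -> bool) -> R),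
  Expect n Pst (fun A => rsum m (fun x => F x A)) = rsum m (fun x => Expect n Pst (F x)).
Proof. intros. unfold Expect. rewrite <- sum_adj_rsum. apply sum_adj_ext. intros.
  rewrite <- rsum_scal. auto. Qed.

Definition bad (n : nat) (Pst : nat -> nat -> R) (D : nat -> nat -> R) (t : R) (A : nat -> nat -> bool) : R :=
  if Rle_dec (Sform n Pst A D) t then 0 else 1.

Lemma chernoff : forall n Pst D t lam, Pbounded n Pst -> Psym n Pst -> 0 < lam <= 1/4 ->
  (forall i j, (i < n)%nat -> (j < n)%nat -> -1 <= D i j <= 1) ->
  Expect n Pst (bad n Pst D t) <= exp (- lam * t + 4 * lam ^ 2 * rsum n (fun i => rsum n (fun j => D i j ^ 2))).
Proof.
  intros n Pst D t lam HB HS Hl HD.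
  set (F := rsum n (fun i => rsum n (fun j => D i j ^ 2))).
  apply Rle_trans with (Expect n Pst (fun A => exp (- lam * t) * exp (lam * Sform n Pst A D))).
  { apply Expect_le; auto. intros A _. unfold bad. rewrite <- exp_plus.
    destruct (Rle_dec (Sform n Pst A D) t). left; apply exp_pos.
    replace 1 with (exp 0) by apply exp_0. apply exp_le. nra. }
  rewrite Expect_scal. rewrite exp_plus. apply Rmult_le_compat_l; [left; apply exp_pos|].
  unfold Expect.
  rewrite (sum_adj_ext_sym _ _ (fun A => lprod (upper_pairs n)
     (fun p => wt Pst p (A (fst p) (snd p)) * exp (lam * ((b2R (A (fst p) (snd p)) - Pst (fst p) (snd p)) * pairval D p))))).
  2:{ intros A HA. rewrite Sform_pairs by auto. rewrite <- lsum_scal, exp_lsum, adj_weight_lprod, lprod_mult. auto. }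
  rewrite (sum_adj_prod _ (fun p b => wt Pst p b * exp (lam * ((b2R b - Pst (fst p) (snd p)) * pairval D p))) (good_upper n)).
  apply Rle_trans with (lprod (upper_pairs n) (fun p => exp (2 * (lam * pairval D p) ^ 2))).
  { apply lprod_le. intros [i j] Hin. apply in_upper in Hin. simpl in Hin.
    destruct (HB i j) as [hb1 hb2]; try lia.
    assert (-(1/2) <= lam * pairval D (i, j) <= 1/2).
    { unfold pairval; simpl. destruct (Nat.eqb_spec i j).
      - subst. destruct (HD j j) as [a b]; try lia. nra.
      - destruct (HD i j) as [a b]; try lia. destruct (HD j i) as [c d]; try lia. nra. }
    split.
    - unfold wt, b2R; simpl. apply Rplus_le_le_0_compat; apply Rmult_le_pos; try lra; left; apply exp_pos.
    - unfold wt, b2R; simpl.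
      replace (lam * ((1 - Pst i j) * pairval D (i, j))) with (lam * pairval D (i, j) * (1 - Pst i j)) by ring.
      replace (lam * ((0 - Pst i j) * pairval D (i, j))) with (lam * pairval D (i, j) * (0 - Pst i j)) by ring.
      apply bern_mgf; auto. }
  rewrite <- exp_lsum. apply exp_le.
  assert (E : F = lsum (upper_pairs n) (pairval (fun i j => D i j ^ 2))) by (apply pair_identity).
  rewrite E, <- lsum_scal. apply lsum_le. intros [i j] _. unfold pairval; simpl.
  assert (0 <= lam ^ 2 * (D i j - D j i) ^ 2) by (apply Rmult_le_pos; apply pow2_ge_0).
  assert (0 <= lam ^ 2 * D i i ^ 2) by (apply Rmult_le_pos; apply pow2_ge_0).
  destruct (Nat.eqb i j); nra.
Qed.

Fixpoint allf {T : Type} (m : nat) (vals : list T) (d : T) : list (nat -> T) :=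
  match m with
  | O => [fun _ => d]
  | S m' => flat_map (fun f => map (fun v => fun i => if Nat.eqb i m' then v else f i) vals) (allf m' vals d)
  end.

Lemma allf_length : forall T m (vals : list T) d, length (allf m vals d) = (length vals ^ m)%nat.
Proof. induction m; intros; simpl; auto.
  rewrite (flat_map_constant_length (c := length vals)).
  - rewrite IHm. lia.
  - intros; rewrite length_map; auto. Qed.

Lemma allf_cover : forall T m (vals : list T) d g, (forall i, (i < m)%nat -> In (g i) vals) ->
  exists f, In f (allf m vals d) /\ forall i, (i < m)%nat -> f i = g i.
Proof. induction m; intros vals d g H.
  - exists (fun _ => d); split; [left; auto|]. intros; lia.
  - destruct (IHm vals d g) as [f' [Hin Hf]]. intros; apply H; lia.
    exists (fun i => if Nat.eqb i m then g m else f' i). split.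
    + simpl. apply in_flat_map. exists f'. split; auto. apply in_map_iff. exists (g m); split; [auto | apply H; lia].
    + intros i Hi. destruct (Nat.eqb_spec i m); subst; auto. apply Hf; lia. Qed.

Lemma floor_ex : forall y, 0 <= y -> exists k : nat, INR k <= y < INR k + 1.
Proof. intros y Hy. destruct (INR_unbounded y) as [N HN].
  revert HN. induction N; intros HN. simpl in HN; lra.
  destruct (Rlt_or_le y (INR N)) as [h|h]. apply IHN; auto.
  exists N. rewrite S_INR in HN. lra. Qed.

Definition grid (M G : nat) : list R := map (fun k => INR k / INR G) (seq 0 (S (M * G))).

Lemma round_ex : forall (M G : nat) x, (0 < G)%nat -> 0 <= x <= INR M ->
  exists v, In v (grid M G) /\ 0 <= v <= x /\ x - v <= / INR G.
Proof. intros M G x HG Hx. assert (HG' : 0 < INR G) by (apply lt_0_INR; auto).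
  destruct (floor_ex (x * INR G)) as [k [h1 h2]]. apply Rmult_le_pos; lra.
  exists (INR k / INR G). split; [|split].
  - apply in_map_iff. exists k; split; auto. apply in_seq. split; [lia|].
    assert (INR k <= INR (M * G)). { rewrite mult_INR. apply Rle_trans with (x * INR G); auto.
      apply Rmult_le_compat_r; lra. }
    apply INR_le in H. lia.
  - split. apply Rmult_le_pos; [apply pos_INR| left; apply Rinv_0_lt_compat; auto].
    apply Rmult_le_reg_r with (INR G); auto.
    replace (INR k / INR G * INR G) with (INR k) by (field; lra). lra.
  - apply Rmult_le_reg_r with (INR G); auto.
    replace ((x - INR k / INR G) * INR G) with (x * INR G - INR k) by (field; lra).
    replace (/ INR G * INR G) with 1 by (field; lra). lra. Qed.

Definition mkQ (z c : nat -> nat) (B H : nat -> nat -> R) : nat -> nat -> R :=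
  fun i j => B (z i) (z j) * H i (c (z j)) * H j (c (z i)).

Definition net (n G K L : nat) : list (nat -> nat -> R) :=
  flat_map (fun z => flat_map (fun c => flat_map (fun B' =>
     map (fun H' => mkQ z c B' H') (allf n (allf L (grid n G) 0) (fun _ => 0)))
     (allf K (allf K (grid 1 G) 0) (fun _ => 0))) (allf K (seq 0 L) 0%nat)) (allf n (seq 0 K) 0%nat).

Lemma net_length : forall n G K L, length (net n G K L) =
  (K ^ n * (L ^ K * ((S G) ^ K) ^ K * ((S (n * G)) ^ L) ^ n))%nat.
Proof. intros. unfold net.
  rewrite (flat_map_constant_length (c := (L ^ K * ((S G) ^ K) ^ K * ((S (n * G)) ^ L) ^ n)%nat)).
  - rewrite allf_length, length_seq; auto.
  - intros z _. rewrite (flat_map_constant_length (c := (((S G) ^ K) ^ K * ((S (n * G)) ^ L) ^ n)%nat)).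
    + rewrite allf_length, length_seq; lia.
    + intros c _. rewrite (flat_map_constant_length (c := (((S (n * G)) ^ L) ^ n)%nat)).
      * rewrite !allf_length. unfold grid. rewrite length_map, length_seq. rewrite Nat.mul_1_l; reflexivity.
      * intros. rewrite length_map, !allf_length. unfold grid. rewrite length_map, length_seq. lia.
Qed.

Lemma rsum_ge_term : forall m f i, (forall j, (j < m)%nat -> 0 <= f j) -> (i < m)%nat -> f i <= rsum m f.
Proof. induction m; intros f i H Hi; [lia|]. simpl.
  destruct (Nat.eq_dec i m). subst. pose proof (rsum_nonneg m f (fun j Hj => H j ltac:(lia))). lra.
  pose proof (IHm f i (fun j Hj => H j ltac:(lia)) ltac:(lia)). pose proof (H m ltac:(lia)). lra. Qed.

Lemma H_le_n : forall n K L P z c B H, NBM_rep n K L P z c B H ->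
  forall i l, (i < n)%nat -> (l < L)%nat -> 0 <= H i l <= INR n.
Proof. intros n K L P z c B H [hz [hc [hB [hH [hs _]]]]] i l Hi Hl.
  split; [apply hH; auto|]. pose proof (hs (z i) l (hz i Hi) Hl) as E.
  apply Rle_trans with (rsum n (fun i0 => if Nat.eqb (z i0) (z i) then H i0 l else 0)).
  - pose proof (rsum_ge_term n (fun i0 => if Nat.eqb (z i0) (z i) then H i0 l else 0) i) as T.
    simpl in T. rewrite Nat.eqb_refl in T. apply T; auto. intros j Hj. destruct (Nat.eqb (z j) (z i)); [apply hH; auto|lra].
  - rewrite E. replace (INR n) with (rsum n (fun _ => 1)) by (rewrite rsum_const; ring).
    apply rsum_le. intros; destruct (Nat.eqb _ _); lra. Qed.

Lemma prod_round : forall b h1 h2 b' h1' h2' N d,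
  0 <= b <= 1 -> 0 <= h1 <= N -> 0 <= h2 <= N -> 0 <= b' <= b -> 0 <= h1' <= h1 -> 0 <= h2' <= h2 ->
  b - b' <= d -> h1 - h1' <= d -> h2 - h2' <= d ->
  0 <= b' * h1' * h2' <= b * h1 * h2 /\ b * h1 * h2 - b' * h1' * h2' <= d * (N * N + 2 * N).
Proof. intros. split. split. apply Rmult_le_pos; [apply Rmult_le_pos|]; lra.
  apply Rmult_le_compat; try lra. apply Rmult_le_pos; lra. apply Rmult_le_compat; lra.
  assert (E : b * h1 * h2 - b' * h1' * h2' = (b - b') * (h1 * h2) + b' * (h1 - h1') * h2 + b' * h1' * (h2 - h2')) by ring.
  rewrite E.
  assert ((b - b') * (h1 * h2) <= d * (N * N)) by (apply Rmult_le_compat; try nra).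
  assert (b' * (h1 - h1') * h2 <= d * N).
  { replace (d * N) with (1 * d * N) by ring. apply Rmult_le_compat; try nra. }
  assert (b' * h1' * (h2 - h2') <= d * N).
  { replace (d * N) with (1 * N * d) by ring. apply Rmult_le_compat; try nra. }
  lra. Qed.

Lemma choice_nat : forall (T : Type) (P : nat -> T -> Prop), (forall k, exists v, P k v) ->
  exists g, forall k, P k (g k).
Proof. intros T P H. exists (fun k => proj1_sig (constructive_indefinite_description _ (H k))).
  intros k. apply (proj2_sig (constructive_indefinite_description _ (H k))). Qed.

Lemma choice_nat2 : forall (T : Type) (P : nat -> nat -> T -> Prop), (forall k k', exists v, P k k' v) ->
  exists g, forall k k', P k k' (g k k').
Proof. intros T P H.
  destruct (choice_nat (nat -> T) (fun k f => forall k', P k k' (f k'))) as [g Hg].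
  - intros k. apply (choice_nat T (P k)). auto.
  - exists g; auto. Qed.

Lemma approx_mat : forall (m1 m2 M G : nat) (X : nat -> nat -> R), (0 < G)%nat ->
  (forall a b, (a < m1)%nat -> (b < m2)%nat -> 0 <= X a b <= INR M) ->
  exists Y, In Y (allf m1 (allf m2 (grid M G) 0) (fun _ => 0)) /\
    forall a b, (a < m1)%nat -> (b < m2)%nat -> 0 <= Y a b <= X a b /\ X a b - Y a b <= / INR G.
Proof.
  intros m1 m2 M G X HG HX.
  destruct (choice_nat2 R (fun a b v => (a < m1)%nat -> (b < m2)%nat ->
      In v (grid M G) /\ 0 <= v <= X a b /\ X a b - v <= / INR G)) as [Xg HXg].
  { intros a b. destruct (Compare_dec.lt_dec a m1); destruct (Compare_dec.lt_dec b m2).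
    - destruct (round_ex M G (X a b) HG (HX a b l l0)) as [v Hv]. exists v; auto.
    - exists 0; intros; lia.
    - exists 0; intros; lia.
    - exists 0; intros; lia. }
  destruct (choice_nat (nat -> R) (fun a f => (a < m1)%nat ->
      In f (allf m2 (grid M G) 0) /\ forall b, (b < m2)%nat -> f b = Xg a b)) as [rows Hrows].
  { intros a. destruct (Compare_dec.lt_dec a m1).
    - destruct (allf_cover R m2 (grid M G) 0 (Xg a)) as [f [Hf1 Hf2]].
      + intros b Hb. apply (HXg a b l Hb).
      + exists f; auto.
    - exists (fun _ => 0); intros; lia. }
  destruct (allf_cover (nat -> R) m1 (allf m2 (grid M G) 0) (fun _ => 0) rows) as [Y [HY1 HY2]].
  { intros a Ha. apply (Hrows a Ha). }
  exists Y. split; auto. intros a b Ha Hb. rewrite HY2 by auto. destruct (Hrows a Ha) as [_ E].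
  rewrite E by auto. destruct (HXg a b Ha Hb) as [_ [h1 h2]]. auto.
Qed.

Lemma net_cover : forall n G K L Ph, (0 < G)%nat -> in_NBM n K L Ph ->
  exists q, In q (net n G K L) /\ forall i j, (i < n)%nat -> (j < n)%nat ->
    0 <= q i j <= Ph i j /\ Ph i j - q i j <= / INR G * (INR n * INR n + 2 * INR n).
Proof.
  intros n G K L Ph HG [z [c [B [H Hrep]]]].
  pose proof (H_le_n _ _ _ _ _ _ _ _ Hrep) as HHn.
  destruct Hrep as [hz [hc [hB [hH [hs [hP hPe]]]]]].
  destruct (allf_cover nat n (seq 0 K) 0%nat z) as [z' [Hz1 Hz2]].
  { intros i Hi. apply in_seq. specialize (hz i Hi). lia. }
  destruct (allf_cover nat K (seq 0 L) 0%nat c) as [c' [Hc1 Hc2]].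
  { intros k Hk. apply in_seq. specialize (hc k Hk). lia. }
  destruct (approx_mat K K 1 G B HG) as [B' [HB1 HB2]].
  { intros a b Ha Hb. simpl. apply hB; auto. }
  destruct (approx_mat n L n G H HG) as [H' [HH1 HH2]].
  { intros a b Ha Hb. apply HHn; auto. }
  exists (mkQ z' c' B' H'). split.
  - unfold net. apply in_flat_map. exists z'. split; auto.
    apply in_flat_map. exists c'. split; auto.
    apply in_flat_map. exists B'. split; auto.
    apply in_map_iff. exists H'. split; auto.
  - intros i j Hi Hj. unfold mkQ. rewrite !Hz2 by auto.
    pose proof (hz i Hi). pose proof (hz j Hj).
    rewrite !Hc2 by auto. rewrite hPe by auto.
    pose proof (hc (z i) ltac:(auto)). pose proof (hc (z j) ltac:(auto)).
    destruct (HB2 (z i) (z j)) as [b1 b2]; auto.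
    destruct (HH2 i (c (z j))) as [h1 h2]; auto.
    destruct (HH2 j (c (z i))) as [h3 h4]; auto.
    assert (0 < INR G) by (apply lt_0_INR; auto).
    replace (/ INR G * (INR n * INR n + 2 * INR n)) with ((/ INR G) * (INR n * INR n + 2 * INR n)) by ring.
    apply prod_round; auto.
Qed.

Lemma ln2_ge : 1/2 <= ln 2.
Proof. assert (exp (1/2) <= 2).
  { pose proof (exp_ineq1_le (-(1/2))). rewrite exp_Ropp in H. pose proof (exp_pos (1/2)).
    assert (1/2 * exp (1/2) <= 1).
    { apply Rmult_le_reg_r with (/ exp (1/2)). apply Rinv_0_lt_compat; auto.
      replace (1/2 * exp (1/2) * / exp (1/2)) with (1/2) by (field; lra). lra. }
    lra. }
  rewrite <- (ln_exp (1/2)). apply ln_le; auto. apply exp_pos. Qed.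

Lemma ln_n_ge : forall n : nat, (2 <= n)%nat -> 1/2 <= ln (INR n).
Proof. intros. apply Rle_trans with (ln 2). apply ln2_ge. apply ln_le. lra.
  replace 2 with (INR 2) by (simpl; ring). apply le_INR; auto. Qed.

Lemma pow_exp : forall a m, 0 < a -> a ^ m = exp (INR m * ln a).
Proof. intros. rewrite <- ln_pow by auto. rewrite exp_ln; auto. apply pow_lt; auto. Qed.

Definition C1v : R := 864.
Definition C2v : R := 96.
Definition Gn (n : nat) : nat := (3 * n ^ 4)%nat.

Lemma count_bound : forall n K L, (2 <= n)%nat -> (1 <= L)%nat -> (L <= K)%nat -> (K <= n)%nat ->
  INR (length (net n (Gn n) K L)) * exp (- (Pen C1v C2v n K L / 96)) <= exp (- (INR n / 32)).
Proof.
  intros n K L Hn HL HLK HK.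
  set (x := INR n). set (k := INR K). set (l := INR L).
  assert (Hx : 2 <= x) by (unfold x; replace 2 with (INR 2) by (simpl; ring); apply le_INR; auto).
  assert (Hk : 1 <= k) by (unfold k; replace 1 with (INR 1) by (simpl; ring); apply le_INR; lia).
  assert (Hl : 1 <= l) by (unfold l; replace 1 with (INR 1) by (simpl; ring); apply le_INR; lia).
  assert (Hlx : l <= x) by (apply le_INR; lia).
  assert (HSG : INR (S (Gn n)) <= x ^ 6).
  { unfold Gn. rewrite S_INR, mult_INR, pow_INR. fold x. simpl (INR 3).
    assert (0 <= x ^ 4 * (x ^ 2 - 4)) by (apply Rmult_le_pos; [apply pow_le; lra | nra]).
    assert (16 <= x ^ 4) by (replace 16 with (2 ^ 4) by ring; apply pow_incr; lra). nra. }
  assert (HSnG : INR (S (n * Gn n)) <= x ^ 7).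
  { unfold Gn. rewrite S_INR, !mult_INR, pow_INR. fold x. simpl (INR 3).
    assert (0 <= x ^ 5 * (x ^ 2 - 4)) by (apply Rmult_le_pos; [apply pow_le; lra | nra]).
    assert (32 <= x ^ 5) by (replace 32 with (2 ^ 5) by ring; apply pow_incr; lra). nra. }
  assert (Hlen : INR (length (net n (Gn n) K L)) <= k ^ n * x ^ (8 * (n * L + K * K))).
  { rewrite net_length. rewrite !mult_INR, !pow_INR. fold k l.
    apply Rmult_le_compat_l. apply pow_le; lra.
    apply Rle_trans with (x ^ K * ((x ^ 6) ^ K) ^ K * ((x ^ 7) ^ L) ^ n).
    - assert (0 <= INR (S (Gn n))) by apply pos_INR.
      assert (0 <= INR (S (n * Gn n))) by apply pos_INR.
      apply Rmult_le_compat; [apply Rmult_le_pos; apply pow_le; try lra; apply pow_le; lra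
                             | apply pow_le; apply pow_le; lra | |].
      + apply Rmult_le_compat; try (apply pow_le; try lra; apply pow_le; lra).
        apply pow_incr; lra. apply pow_incr; split; [apply pow_le; lra|]. apply pow_incr; lra.
      + apply pow_incr; split; [apply pow_le; lra|]. apply pow_incr; lra.
    - rewrite <- !pow_mult, <- !pow_add. apply Rle_pow; [lra|]. nia. }
  assert (Hpen : Pen C1v C2v n K L / 96 = 9 * ((x * l + k ^ 2) * ln x) + INR n * ln k).
  { unfold Pen, C1v, C2v. fold x k l. field. }
  rewrite Hpen.
  rewrite (pow_exp x) in Hlen by lra. rewrite (pow_exp k) in Hlen by lra.
  rewrite <- exp_plus in Hlen.
  apply Rle_trans with (exp (INR n * ln k + INR (8 * (n * L + K * K)) * ln x) *
     exp (- (9 * ((x * l + k ^ 2) * ln x) + INR n * ln k))).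
  { apply Rmult_le_compat_r; auto. left; apply exp_pos. }
  rewrite <- exp_plus. apply exp_le.
  rewrite mult_INR, plus_INR, mult_INR. fold x k l. simpl (INR 8).
  pose proof (ln_n_ge n Hn). fold x in H.
  assert (x <= x * l + k ^ 2) by nra.
  assert (x * (1/2) <= (x * l + k ^ 2) * ln x) by (apply Rmult_le_compat; nra).
  rewrite mult_INR; fold k. replace (k * k) with (k ^ 2) by ring. nra.
Qed.

Definition R2 (n : nat) (f : nat -> nat -> R) : R := rsum n (fun i => rsum n (fun j => f i j)).

Lemma R2_ext : forall n f g, (forall i j, (i < n)%nat -> (j < n)%nat -> f i j = g i j) -> R2 n f = R2 n g.
Proof. intros. unfold R2. apply rsum_ext; intros. apply rsum_ext; intros; auto. Qed.
Lemma R2_le : forall n f g, (forall i j, (i < n)%nat -> (j < n)%nat -> f i j <= g i j) -> R2 n f <= R2 n g.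
Proof. intros. unfold R2. apply rsum_le; intros. apply rsum_le; intros; auto. Qed.
Lemma R2_plus : forall n f g, R2 n (fun i j => f i j + g i j) = R2 n f + R2 n g.
Proof. intros. unfold R2. rewrite <- rsum_plus. apply rsum_ext; intros. apply rsum_plus. Qed.
Lemma R2_scal : forall n c f, R2 n (fun i j => c * f i j) = c * R2 n f.
Proof. intros. unfold R2. rewrite <- rsum_scal. apply rsum_ext; intros. apply rsum_scal. Qed.
Lemma R2_const : forall n c, R2 n (fun _ _ => c) = INR n * INR n * c.
Proof. intros. unfold R2. rewrite (rsum_ext _ _ (fun _ => INR n * c)) by (intros; apply rsum_const).
  rewrite rsum_const. ring. Qed.

Lemma frob_R2 : forall n P Q, frob2 n P Q = R2 n (fun i j => (P i j - Q i j) ^ 2).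
Proof. reflexivity. Qed.
Lemma Sform_R2 : forall n Pst A D, Sform n Pst A D = R2 n (fun i j => (adjR A i j - Pst i j) * D i j).
Proof. reflexivity. Qed.

Lemma frob_expand : forall n A Q Pst,
  frob2 n (adjR A) Q = frob2 n (adjR A) Pst - 2 * Sform n Pst A (fun i j => Q i j - Pst i j) + frob2 n Q Pst.
Proof. intros. rewrite !frob_R2, Sform_R2, <- R2_scal.
  replace (R2 n (fun i j => (adjR A i j - Pst i j) ^ 2) - R2 n (fun i j => 2 * ((adjR A i j - Pst i j) * (Q i j - Pst i j))))
    with (R2 n (fun i j => (adjR A i j - Pst i j) ^ 2 + (-1) * (2 * ((adjR A i j - Pst i j) * (Q i j - Pst i j)))))
    by (rewrite R2_plus, R2_scal; ring).
  rewrite <- R2_plus. apply R2_ext; intros; ring. Qed.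

Lemma adjR_01 : forall A i j, 0 <= adjR A i j <= 1.
Proof. intros; unfold adjR, b2R; destruct (A i j); lra. Qed.

Lemma determ : forall n A (Pst P Ph q : nat -> nat -> R) (e x0 Pen Penh : R),
  Pbounded n Pst -> Pbounded n P -> Pbounded n Ph ->
  (forall i j, (i < n)%nat -> (j < n)%nat -> 0 <= q i j <= Ph i j /\ Ph i j - q i j <= e) ->
  0 <= e <= 1 -> INR n * INR n * e <= 1 ->
  frob2 n (adjR A) Ph + Penh <= frob2 n (adjR A) P + Pen ->
  Sform n Pst A (fun i j => Pst i j - P i j) <= frob2 n P Pst / 12 + x0 ->
  Sform n Pst A (fun i j => q i j - Pst i j) <= frob2 n q Pst / 12 + Penh / 2 ->
  2 * x0 + 3 <= Pen ->
  frob2 n Ph Pst <= 3 * (frob2 n P Pst + Pen).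
Proof.
  intros n A Pst P Ph q e x0 Pen Penh HPst HP HPh Hq He Hne Hopt E0 Eq Hpen.
  rewrite (frob_expand n A Ph Pst), (frob_expand n A P Pst) in Hopt.
  assert (S1 : Sform n Pst A (fun i j => Ph i j - Pst i j) <= Sform n Pst A (fun i j => q i j - Pst i j) + 1).
  { rewrite !Sform_R2. apply Rle_trans with (R2 n (fun i j => (adjR A i j - Pst i j) * (q i j - Pst i j) + e)).
    - apply R2_le. intros i j Hi Hj. destruct (Hq i j Hi Hj) as [[h1 h2] h3].
      destruct (HPst i j Hi Hj). pose proof (adjR_01 A i j).
      assert ((adjR A i j - Pst i j) * (Ph i j - q i j) <= e).
      { destruct (Rle_dec 0 (adjR A i j - Pst i j)).
        - replace e with (1 * e) by ring. apply Rmult_le_compat; lra.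
        - assert ((adjR A i j - Pst i j) * (Ph i j - q i j) <= 0) by nra. lra. }
      nra.
    - rewrite R2_plus, R2_const. lra. }
  assert (S2 : frob2 n q Pst <= 2 * frob2 n Ph Pst + 2).
  { rewrite !frob_R2. apply Rle_trans with (R2 n (fun i j => 2 * (Ph i j - Pst i j) ^ 2 + 2 * e)).
    - apply R2_le. intros i j Hi Hj. destruct (Hq i j Hi Hj) as [[h1 h2] h3].
      assert ((Ph i j - q i j) ^ 2 <= e) by nra.
      assert (0 <= ((Ph i j - Pst i j) + (Ph i j - q i j)) ^ 2) by apply pow2_ge_0.
      nra.
    - rewrite R2_plus, R2_scal, R2_const. lra. }
  assert (S3 : Sform n Pst A (fun i j => P i j - Pst i j) = - Sform n Pst A (fun i j => Pst i j - P i j)).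
  { rewrite !Sform_R2. replace (- R2 n (fun i j => (adjR A i j - Pst i j) * (Pst i j - P i j))) with
      ((-1) * R2 n (fun i j => (adjR A i j - Pst i j) * (Pst i j - P i j))) by ring.
    rewrite <- R2_scal. apply R2_ext; intros; ring. }
  assert (0 <= frob2 n P Pst) by (rewrite frob_R2; unfold R2; apply rsum_nonneg; intros; apply rsum_nonneg; intros; apply pow2_ge_0).
  lra.
Qed.

Lemma lsum_nonneg : forall X (l : list X) f, (forall y, In y l -> 0 <= f y) -> 0 <= lsum l f.
Proof. induction l; intros f H; unfold lsum in *; simpl; [lra|].
  pose proof (H a (or_introl eq_refl)). pose proof (IHl f (fun y Hy => H y (or_intror Hy))). lra. Qed.

Lemma lsum_ge_member : forall X (l : list X) f x, In x l -> (forall y, In y l -> 0 <= f y) -> f x <= lsum l f.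
Proof. induction l; intros f x Hx H; [destruct Hx|]. unfold lsum; simpl. fold (lsum l f).
  destruct Hx as [<-|Hx].
  - pose proof (lsum_nonneg _ l f (fun y Hy => H y (or_intror Hy))). lra.
  - pose proof (IHl f x Hx (fun y Hy => H y (or_intror Hy))). pose proof (H a (or_introl eq_refl)). lra. Qed.

Lemma lsum_const : forall X (l : list X) c, lsum l (fun _ => c) = INR (length l) * c.
Proof. induction l; intros; unfold lsum in *; simpl length; simpl fold_right; [simpl; lra|]. rewrite IHl. rewrite S_INR. ring. Qed.

Lemma bad_01 : forall n Pst D t A, 0 <= bad n Pst D t A <= 1.
Proof. intros; unfold bad; destruct (Rle_dec _ _); lra. Qed.

Lemma Expect_if : forall n Pst (b : bool) F, Expect n Pst (fun A => if b then F A else 0) = if b then Expect n Pst F else 0.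
Proof. intros. destruct b; auto. apply Expect_const. Qed.

Lemma Pen_bounds : forall n K L, (2 <= n)%nat -> (1 <= L)%nat -> (L <= K)%nat -> (K <= n)%nat ->
  3 * INR n + 3 <= Pen C1v C2v n K L.
Proof. intros n K L Hn HL HLK HK. unfold Pen, C1v, C2v.
  pose proof (ln_n_ge n Hn).
  assert (Hx : 2 <= INR n) by (replace 2 with (INR 2) by (simpl; ring); apply le_INR; auto).
  assert (Hk : 1 <= INR K) by (replace 1 with (INR 1) by (simpl; ring); apply le_INR; lia).
  assert (Hl : 1 <= INR L) by (replace 1 with (INR 1) by (simpl; ring); apply le_INR; lia).
  assert (0 <= ln (INR K)) by (rewrite <- ln_1; apply ln_le; lra).
  assert (0 <= INR n * ln (INR K)) by (apply Rmult_le_pos; lra).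
  assert (INR n <= INR n * INR L + INR K ^ 2) by nra.
  assert (INR n * (1/2) <= (INR n * INR L + INR K ^ 2) * ln (INR n)) by (apply Rmult_le_compat; nra).
  nra. Qed.

Definition clip (q : nat -> nat -> R) : nat -> nat -> R := fun i j => Rmin 1 (Rmax 0 (q i j)).

Lemma clip_bd : forall q i j, 0 <= clip q i j <= 1.
Proof. intros; unfold clip, Rmin, Rmax. destruct (Rle_dec 0 (q i j)); destruct (Rle_dec 1 _); lra. Qed.

Lemma clip_id : forall q i j, 0 <= q i j <= 1 -> clip q i j = q i j.
Proof. intros q i j H; unfold clip, Rmin, Rmax. destruct (Rle_dec 0 (q i j)); [|lra].
  destruct (Rle_dec 1 (q i j)); lra. Qed.

Lemma frob_le_n2 : forall n P Q, Pbounded n P -> Pbounded n Q -> frob2 n P Q <= INR n * INR n.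
Proof. intros. rewrite frob_R2, <- (Rmult_1_r (INR n * INR n)), <- R2_const. apply R2_le.
  intros i j Hi Hj. destruct (H i j Hi Hj), (H0 i j Hi Hj). nra. Qed.

Lemma frob_nonneg : forall n P Q, 0 <= frob2 n P Q.
Proof. intros; rewrite frob_R2; unfold R2; apply rsum_nonneg; intros; apply rsum_nonneg; intros; apply pow2_ge_0. Qed.

Definition Badnet n Pst Kp Lp (A : nat -> nat -> bool) : R :=
  lsum (net n (Gn n) Kp Lp) (fun q => bad n Pst (fun i j => clip q i j - Pst i j)
        (frob2 n (clip q) Pst / 12 + Pen C1v C2v n Kp Lp / 2) A).

Definition Bad n Pst (P : nat -> nat -> R) (A : nat -> nat -> bool) : R :=
  bad n Pst (fun i j => Pst i j - P i j) (frob2 n P Pst / 12 + 3/2 * INR n) A +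
  rsum n (fun a => rsum n (fun b => if Nat.leb b a then Badnet n Pst (S a) (S b) A else 0)).

Lemma Bad_nonneg : forall n Pst P A, 0 <= Bad n Pst P A.
Proof. intros. unfold Bad. pose proof (bad_01 n Pst (fun i j => Pst i j - P i j) (frob2 n P Pst / 12 + 3/2 * INR n) A).
  assert (0 <= rsum n (fun a => rsum n (fun b => if Nat.leb b a then Badnet n Pst (S a) (S b) A else 0))).
  { apply rsum_nonneg; intros; apply rsum_nonneg; intros. destruct (Nat.leb _ _); [|lra].
    apply lsum_nonneg. intros; apply bad_01. }
  lra. Qed.

Lemma Expect_Bad : forall n Pst P, (2 <= n)%nat -> Pbounded n Pst -> Psym n Pst -> Pbounded n P ->
  Expect n Pst (Bad n Pst P) <= (1 + INR n * INR n) * exp (- (INR n / 32)).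
Proof.
  intros n Pst P Hn HB HS HP. unfold Bad. rewrite Expect_plus, Expect_rsum.
  assert (H0 : Expect n Pst (bad n Pst (fun i j => Pst i j - P i j) (frob2 n P Pst / 12 + 3/2 * INR n)) <= exp (- (INR n / 32))).
  { eapply Rle_trans. apply (chernoff n Pst _ _ (1/48) HB HS). lra.
    intros i j Hi Hj. destruct (HB i j Hi Hj), (HP i j Hi Hj). lra.
    apply exp_le. replace (rsum n (fun i => rsum n (fun j => (Pst i j - P i j) ^ 2))) with (frob2 n P Pst).
    lra. rewrite frob_R2. apply R2_ext. intros; ring. }
  assert (H1 : rsum n (fun x => Expect n Pst (fun A => rsum n (fun b => if Nat.leb b x then Badnet n Pst (S x) (S b) A else 0)))
     <= rsum n (fun _ => rsum n (fun _ => exp (- (INR n / 32))))).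
  { apply rsum_le. intros a Ha. rewrite Expect_rsum. apply rsum_le. intros b Hb. rewrite Expect_if.
    destruct (Nat.leb_spec b a); [|left; apply exp_pos].
    unfold Badnet. rewrite Expect_lsum.
    apply Rle_trans with (lsum (net n (Gn n) (S a) (S b)) (fun _ => exp (- (Pen C1v C2v n (S a) (S b) / 96)))).
    - apply lsum_le. intros q _. eapply Rle_trans. apply (chernoff n Pst _ _ (1/48) HB HS). lra.
      intros i j Hi Hj. destruct (HB i j Hi Hj). pose proof (clip_bd q i j). lra.
      apply exp_le. replace (rsum n (fun i => rsum n (fun j => (clip q i j - Pst i j) ^ 2))) with (frob2 n (clip q) Pst)
        by reflexivity. lra.
    - rewrite lsum_const. apply count_bound; lia. }
  rewrite (rsum_ext n (fun _ => rsum n (fun _ => exp (- (INR n / 32)))) (fun _ => INR n * exp (- (INR n / 32)))) in H1 by (intros; apply rsum_const).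
  rewrite rsum_const in H1. lra.
Qed.

Lemma nbm_bounded : forall n K L P, in_NBM n K L P -> Pbounded n P.
Proof. intros n K L P [z [c [B [H Hr]]]]. destruct Hr as [_ [_ [_ [_ [_ [h _]]]]]]. exact h. Qed.

Lemma e_bounds : forall n, (2 <= n)%nat ->
  let e := / INR (Gn n) * (INR n * INR n + 2 * INR n) in 0 <= e <= 1 /\ INR n * INR n * e <= 1.
Proof. intros n Hn e.
  assert (Hx : 2 <= INR n) by (replace 2 with (INR 2) by (simpl; ring); apply le_INR; auto).
  assert (HG : INR (Gn n) = 3 * INR n ^ 4) by (unfold Gn; rewrite mult_INR, pow_INR; simpl; ring).
  assert (He : e = (INR n + 2) / (3 * INR n ^ 3)) by (unfold e; rewrite HG; field; lra).
  assert (H3 : 0 < INR n ^ 3) by (apply pow_lt; lra).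
  assert (H1 : INR n * INR n * e <= 1).
  { rewrite He. replace (INR n * INR n * ((INR n + 2) / (3 * INR n ^ 3))) with ((INR n + 2) / (3 * INR n)) by (field; lra).
    apply Rmult_le_reg_r with (3 * INR n). lra. replace ((INR n + 2) / (3 * INR n) * (3 * INR n)) with (INR n + 2) by (field; lra). lra. }
  assert (H0 : 0 <= e) by (rewrite He; apply Rmult_le_pos; [lra|]; left; apply Rinv_0_lt_compat; lra).
  split; [split|]; auto. nra. Qed.

Lemma key : forall n Pst P K L A Kh Lh Ph, (2 <= n)%nat -> Pbounded n Pst -> Pbounded n P ->
  (1 <= L)%nat -> (L <= K)%nat -> (K <= n)%nat -> in_NBM n K L P ->
  is_argmin C1v C2v n A Kh Lh Ph ->
  frob2 n Ph Pst <= 3 * (frob2 n P Pst + Pen C1v C2v n K L) \/ 1 <= Bad n Pst P A.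
Proof.
  intros n Pst P K L A Kh Lh Ph Hn HB HP HL HLK HK HN Harg.
  assert (Hr : 0 <= rsum n (fun a => rsum n (fun b => if Nat.leb b a then Badnet n Pst (S a) (S b) A else 0))).
  { apply rsum_nonneg; intros; apply rsum_nonneg; intros. destruct (Nat.leb _ _); [|lra].
    apply lsum_nonneg. intros; apply bad_01. }
  destruct (Rle_dec (Sform n Pst A (fun i j => Pst i j - P i j)) (frob2 n P Pst / 12 + 3/2 * INR n)) as [E0|E0].
  2:{ right. unfold Bad, bad at 1. destruct (Rle_dec _ _); [contradiction|]. lra. }
  destruct Harg as [hL [hLK [hK [hN hmin]]]].
  pose proof (hmin K L P HL HLK HK HN) as Hopt. unfold objective in Hopt.
  assert (HG : (0 < Gn n)%nat) by (unfold Gn; assert (0 < n ^ 4)%nat by (apply Nat.neq_0_lt_0; apply Nat.pow_nonzero; lia); lia).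
  destruct (net_cover n (Gn n) Kh Lh Ph HG hN) as [q [Hq Hqa]].
  pose proof (nbm_bounded _ _ _ _ hN) as HPh.
  destruct (Rle_dec (Sform n Pst A (fun i j => clip q i j - Pst i j)) (frob2 n (clip q) Pst / 12 + Pen C1v C2v n Kh Lh / 2)) as [Eq|Eq].
  - left. destruct (e_bounds n Hn) as [He1 He2].
    apply (determ n A Pst P Ph (clip q) (/ INR (Gn n) * (INR n * INR n + 2 * INR n)) (3/2 * INR n) (Pen C1v C2v n K L) (Pen C1v C2v n Kh Lh)); auto.
    + intros i j Hi Hj. destruct (Hqa i j Hi Hj) as [h1 h2]. destruct (HPh i j Hi Hj).
      rewrite clip_id by lra. split; auto.
    + pose proof (Pen_bounds n K L Hn HL HLK HK). lra.
  - right. unfold Bad.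
    assert (bad n Pst (fun i j => Pst i j - P i j) (frob2 n P Pst / 12 + 3/2 * INR n) A >= 0) by (pose proof (bad_01 n Pst (fun i j => Pst i j - P i j) (frob2 n P Pst / 12 + 3/2 * INR n) A); lra).
    enough (1 <= rsum n (fun a => rsum n (fun b => if Nat.leb b a then Badnet n Pst (S a) (S b) A else 0))) by lra.
    eapply Rle_trans; [|apply (rsum_ge_term n _ (Kh - 1))]; [| |lia].
    2:{ intros; apply rsum_nonneg; intros; destruct (Nat.leb _ _); [|lra]. apply lsum_nonneg. intros; apply bad_01. }
    eapply Rle_trans; [|apply (rsum_ge_term n _ (Lh - 1))]; [| |lia].
    2:{ intros; destruct (Nat.leb _ _); [|lra]. apply lsum_nonneg. intros; apply bad_01. }
    cbv beta. replace (Nat.leb (Lh - 1) (Kh - 1)) with true by (symmetry; apply Nat.leb_le; lia).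
    replace (S (Kh - 1)) with Kh by lia. replace (S (Lh - 1)) with Lh by lia.
    unfold Badnet. eapply Rle_trans; [|apply (lsum_ge_member _ _ _ q Hq)].
    + unfold bad. destruct (Rle_dec _ _); [contradiction|lra].
    + intros; apply bad_01.
Qed.

Theorem theorem1 :
  exists C1 C2 : R, 0 < C1 /\ 0 < C2 /\
  forall (n Ks Ls : nat) (Pstar : nat -> nat -> R)
         (zs cs : nat -> nat) (B H : nat -> nat -> R) (lam0 : R),
    (2 <= n)%nat -> (1 <= Ls)%nat -> (Ls <= Ks)%nat -> (Ks <= n)%nat ->
    (forall i j, (i < n)%nat -> (j < n)%nat -> Pstar i j = Pstar j i) ->
    NBM_rep n Ks Ls Pstar zs cs B H ->
    0 < lam0 -> min_sing_value_ge Ks B lam0 ->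
    A2_lin_indep n Ks Ls zs H ->
    forall (Kh Lh : (nat -> nat -> bool) -> nat)
           (Ph : (nat -> nat -> bool) -> nat -> nat -> R),
    (forall A : nat -> nat -> bool, (forall i j, A i j = A j i) ->
       is_argmin C1 C2 n A (Kh A) (Lh A) (Ph A)) ->
    forall (K L : nat) (P : nat -> nat -> R),
      (1 <= L)%nat -> (L <= K)%nat -> (K <= n)%nat -> in_NBM n K L P ->
      Prob_le n Pstar (fun A => frob2 n (Ph A) Pstar)
                      (fun _ => 3 * (frob2 n P Pstar + Pen C1 C2 n K L))
        >= 1 - (INR n ^ 2 * (ln (INR n) / ln 2) + 1) * exp (- INR n / 32)
      /\
      Expect n Pstar (fun A => frob2 n (Ph A) Pstar)
        <= 3 * (frob2 n P Pstar + Pen C1 C2 n K L) + INR n ^ 5 * exp (- INR n / 32).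
Proof.
  exists C1v, C2v. split; [unfold C1v; lra|]. split; [unfold C2v; lra|].
  intros n Ks Ls Pst zs cs B H lam0 Hn _ _ _ HS Hrep _ _ _ Kh Lh Ph Harg K L P HL HLK HK HN.
  assert (HB : Pbounded n Pst) by (apply (nbm_bounded n Ks Ls); exists zs, cs, B, H; auto).
  assert (HP : Pbounded n P) by (apply (nbm_bounded _ _ _ _ HN)).
  replace (- INR n / 32) with (- (INR n / 32)) by field.
  set (bound := 3 * (frob2 n P Pst + Pen C1v C2v n K L)).
  set (eps := exp (- (INR n / 32))).
  pose proof (Expect_Bad n Pst P Hn HB HS HP) as EB. fold eps in EB.
  assert (Hx : 2 <= INR n) by (replace 2 with (INR 2) by (simpl; ring); apply le_INR; auto).
  assert (Heps : 0 < eps) by apply exp_pos.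
  assert (KEY : forall A, sym A -> frob2 n (Ph A) Pst <= bound \/ 1 <= Bad n Pst P A).
  { intros A HA. apply (key n Pst P K L A (Kh A) (Lh A) (Ph A)); auto. }
  split.
  - apply Rle_ge. unfold Prob_le.
    apply Rle_trans with (Expect n Pst (fun A => 1 + (-1) * Bad n Pst P A)).
    + rewrite Expect_plus, Expect_scal, Expect_const.
      assert (1 <= ln (INR n) / ln 2).
      { pose proof ln2_ge. apply Rmult_le_reg_r with (ln 2); [lra|].
        replace (ln (INR n) / ln 2 * ln 2) with (ln (INR n)) by (field; lra).
        rewrite Rmult_1_l. apply ln_le; lra. }
      assert (INR n ^ 2 <= INR n ^ 2 * (ln (INR n) / ln 2)).
      { pose proof (pow_le (INR n) 2 ltac:(lra)). nra. }
      assert ((1 + INR n * INR n) * eps <= (INR n ^ 2 * (ln (INR n) / ln 2) + 1) * eps).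
      { apply Rmult_le_compat_r; [lra|]. simpl. lra. }
      lra.
    + apply Expect_le; auto. intros A HA. pose proof (Bad_nonneg n Pst P A).
      destruct (Rle_dec _ _) as [h|h]; [lra|].
      destruct (KEY A HA) as [k|k]; [unfold bound in k; contradiction|lra].
  - apply Rle_trans with (Expect n Pst (fun A => bound + (INR n * INR n) * Bad n Pst P A)).
    + apply Expect_le; auto. intros A HA. pose proof (Bad_nonneg n Pst P A).
      assert (0 <= bound).
      { unfold bound. pose proof (frob_nonneg n P Pst). pose proof (Pen_bounds n K L Hn HL HLK HK). lra. }
      destruct (KEY A HA) as [k|k].
      * assert (0 <= INR n * INR n * Bad n Pst P A) by (apply Rmult_le_pos; nra). lra.
      * assert (Hb : Pbounded n (Ph A)).
        { destruct (Harg A HA) as [_ [_ [_ [hN _]]]]. apply (nbm_bounded _ _ _ _ hN). }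
        pose proof (frob_le_n2 n (Ph A) Pst Hb HB).
        assert (INR n * INR n * 1 <= INR n * INR n * Bad n Pst P A) by (apply Rmult_le_compat_l; nra).
        lra.
    + rewrite Expect_plus, Expect_const, Expect_scal. fold bound.
      assert (INR n * INR n * Expect n Pst (Bad n Pst P) <= INR n * INR n * ((1 + INR n * INR n) * eps))
        by (apply Rmult_le_compat_l; nra).
      assert (INR n * INR n * (1 + INR n * INR n) <= INR n ^ 5).
      { assert (0 <= INR n ^ 2 * (INR n ^ 3 - INR n ^ 2 - 1)).
        { apply Rmult_le_pos. apply pow_le; lra.
          assert (INR n ^ 3 = INR n * INR n ^ 2) by ring.
          assert (4 <= INR n ^ 2) by nra. nra. }
        nra. }
      assert (INR n * INR n * ((1 + INR n * INR n) * eps) <= INR n ^ 5 * eps).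
      { rewrite <- Rmult_assoc. apply Rmult_le_compat_r; lra. }
      lra.
Qed.
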